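(* Let $U$ be an undirected graph with $n$ vertices, diameter $d$ and maximum degree $\Delta$ satisfying $\Delta^d-1<n(\Delta-1)$. Then for any vertex $v$ and any subset $A$ of vertices with $|A|\le\Delta$, there exists a vertex $u\neq v$ with $\operatorname{dist}(u,A)>d-2$.
   Context: $\operatorname{dist}$ denotes graph distance in $U$, and for a vertex $u$ and vertex set $A$, $\operatorname{dist}(u,A)=\min\{\operatorname{dist}(u,a):a\in A\}$. *)

(* Defs.v *)
From mathcomp Require Import all_boot all_order all_algebra.
Set Implicit Arguments. Unset Strict Implicit. Unset Printing Implicit Defensive.

(* A finite simple undirected graph on vertex type T is given by an edge
   relation e : rel T that is symmetric and irreflexive. *)

Definition walkb (T : finType) (e : rel T) (k : nat) (u w : T) : bool :=
  [exists p : k.-tuple T, path e u p && (last u p == w)].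

(* Shortest paths have length < #|T|, so on a connected graph this is
   the true distance (the value #|T| is only a sentinel for unreachable
   pairs, which do not occur under the connectivity hypothesis). *)
Definition dist (T : finType) (e : rel T) (u w : T) : nat :=
  find (fun k => walkb e k u w) (iota 0 #|T|).

Definition diameter (T : finType) (e : rel T) : nat :=
  \max_(u : T) \max_(w : T) dist e u w.

Definition maxdeg (T : finType) (e : rel T) : nat :=
  \max_(u : T) #|[set w | e u w]|.

(* Main.v *)
Require Import Defs.
From mathcomp Require Import all_boot all_order all_algebra.
From mathcomp Require Import zify.
Import Order.TTheory GRing.Theory Num.Theory.

Section Aux.
Variables (T : finType) (e : rel T).

Fixpoint reach (k : nat) (a : T) : {set T} :=
  if k is k'.+1 then \bigcup_(w in reach k' a) [set u | e w u] else [set a].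

Lemma card_bigcup_le (I : finType) (P : pred I) (F : I -> {set T}) :
  #|\bigcup_(i | P i) F i| <= \sum_(i | P i) #|F i|.
Proof.
apply: (big_ind2 (fun (A : {set T}) n => #|A| <= n)).
- by rewrite cards0.
- move=> A n B m hA hB; apply: leq_trans (leq_card_setU A B) _.
  exact: leq_add.
- by [].
Qed.

Lemma walk_reach (esym : symmetric e) k u a : walkb e k u a -> u \in reach k a.
Proof.
elim: k u => [|k IH] u.
  by case/existsP=> t /andP[_ /eqP]; rewrite tuple0 /= => ->; rewrite in_set1.
case/existsP=> t; case/tupleP: t => x t /= /andP[/andP[exu pt] lt].
have hx : x \in reach k a.
  by apply: IH; apply/existsP; exists t; rewrite pt.
apply/bigcupP; exists x => //; rewrite inE esym; exact: exu.
Qed.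

Lemma card_reach k a : #|reach k a| <= (maxdeg e) ^ k.
Proof.
elim: k => [|k IH] /=; first by rewrite cards1.
apply: (leq_trans (card_bigcup_le _ _ _)).
apply: leq_trans (_ : \sum_(w in reach k a) maxdeg e <= _).
  apply: leq_sum => w _.
  exact: (@leq_bigmax _ (fun u => #|[set w0 | e u w0]|) w).
by rewrite sum_nat_const expnS mulnC leq_mul2l IH orbT.
Qed.

Lemma geo D j : D * (\sum_(k < j) D.+1 ^ k) + 1 = D.+1 ^ j.
Proof.
elim: j => [|j IH]; first by rewrite big_ord0 muln0.
rewrite big_ord_recr /= expnS mulnDr -addnAC IH.
by rewrite mulSn.
Qed.

End Aux.

Theorem mainTheorem14 (T : finType) (e : rel T)
  (e_sym : symmetric e) (e_irr : irreflexive e)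
  (e_conn : forall u w : T, connect e u w)
  (hyp : ((maxdeg e)%:Z ^+ (diameter e) - 1 <
          (#|T|)%:Z * ((maxdeg e)%:Z - 1))%R) :
  forall (v : T) (A : {set T}), #|A| <= maxdeg e ->
    exists u : T, u != v /\
      (forall a, a \in A -> ((diameter e)%:Z - 2 < (dist e u a)%:Z)%R).
Proof.
move=> v A hA.
set D := maxdeg e in hyp hA *.
set d := diameter e in hyp *.
set n := #|T| in hyp.
have n1 : 0 < n by rewrite /n; apply/card_gt0P; exists v.
have E : (D%:Z ^+ d = (D ^ d)%:Z)%R.
  by elim: (d) => [|j IH]; rewrite ?expr0 ?expn0 // exprS expnS PoszM IH.
rewrite E in hyp.
have dle : d <= n.
  apply/bigmax_leqP => u _; apply/bigmax_leqP => w _.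
  by rewrite /dist; apply: leq_trans (find_size _ _) _; rewrite size_iota.
have Dn : D <= n.
  by apply/bigmax_leqP => u _; apply: max_card.
have cr : forall k a, #|@reach T e k a| <= D ^ k by move=> k a; exact: card_reach.
clearbody D d.
have D2 : 1 < D.
  clear -hyp n1; destruct D as [|[|m]] => //.
  - destruct d as [|j]; rewrite ?expn0 ?exp0n // in hyp; lia.
  - rewrite exp1n in hyp; lia.
have key : forall B : {set T}, #|B|.+1 < n -> exists u, u != v /\ u \notin B.
  move=> B hB.
  have hc : 0 < #|~: (v |: B)|.
    have := cardsC (v |: B); rewrite cardsU1; case: (v \in B) => /= H; rewrite -/n in H; lia.
  case/card_gt0P: hc => u; rewrite !inE negb_or => /andP[h1 h2].
  by exists u.
case: (ltnP d 2) => hd.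
  have [u [uv _]] := key set0 ltac:(rewrite cards0; lia).
  by exists u; split => // a _; lia.
set r := d - 2.
pose B := \bigcup_(x in A) \bigcup_(k < r.+1) @reach T e k x.
have cB : #|B| <= D * \sum_(k < r.+1) D ^ k.
  rewrite /B; apply: (leq_trans (card_bigcup_le _ _ _ _)).
  apply: leq_trans (_ : \sum_(x in A) \sum_(k < r.+1) D ^ k <= _).
    apply: leq_sum => x _; apply: (leq_trans (card_bigcup_le _ _ _ _)).
    by apply: leq_sum => k _; apply: cr.
  by rewrite sum_nat_const leq_mul2r hA orbT.
have hB : #|B|.+1 < n.
  suff h : (D * \sum_(k < r.+1) D ^ k).+1 < n by apply: leq_ltn_trans h; rewrite ltnS.
  have dr : d = r.+2 by rewrite /r; lia.
  rewrite dr in hyp; clear -hyp D2; destruct D as [|[|m]] => //.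
  have G := geo m.+1 r.+1.
  set S := \sum_(k < r.+1) m.+2 ^ k in G *.
  rewrite expnS -G in hyp.
  have h2 : m.+1 * (m.+2 * S).+1 < m.+1 * n by lia.
  by rewrite ltn_pmul2l in h2.
have [u [uv uB]] := key B hB.
exists u; split => // a aA.
rewrite ltrBlDr -PoszD ltz_nat.
rewrite ltnNge; apply/negP => hle.
have hk : dist e u a <= r by lia.
have hlt : dist e u a < n by lia.
have W : walkb e (dist e u a) u a.
  have hf : has (fun k => walkb e k u a) (iota 0 n).
    by rewrite has_find size_iota.
  have := nth_find 0 hf.
  by rewrite nth_iota -?size_iota ?add0n -/(dist e u a) //; rewrite -(size_iota 0 n) -has_find.
move/negP: uB; apply; apply/bigcupP; exists a => //.
apply/bigcupP; exists (Ordinal (hk : dist e u a < r.+1)) => //.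
exact: walk_reach.
Qed.
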